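(* Let $g_y(\omega)=\frac{\sigma_\epsilon^2}{2\pi}|\kappa(e^{i\omega})|^2$ be the spectral density of an invertible ARMA process, i.e. $\sigma_\epsilon^2>0$ and $\kappa(z)=\eta(z)/\phi(z)$ where $\eta,\phi$ are polynomials with no common zeros, all of whose zeros lie in $\{|z|>1\}$, normalized so that $\kappa(0)=1$. For $\beta\in[0,1]$ and $\theta\in(-1,1)$ let $$f(\theta,\beta)=-\int_{-\pi}^{\pi}\frac{e^{i\omega}+\beta\theta}{|(1+\theta e^{i\omega})(1+\beta\theta e^{i\omega})|^2}\,g_y(\omega)\,d\omega .$$ Then for each $\beta\in[0,1]$ the set $\Theta_0^\beta=\{\theta\in(-1,1): f(\theta,\beta)=0\}$ is finite. *)

(* Defs.v *)
From Stdlib Require Export Reals List.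
From Coquelicot Require Export Coquelicot.
Open Scope R_scope.

(* A polynomial with real coefficients, given by its coefficient list
   [c0; c1; ...; cn] (meaning c0 + c1 z + ... + cn z^n), evaluated at a complex point. *)
Fixpoint peval (p : list R) (z : C) : C :=
  match p with
  | nil => RtoC 0
  | a :: q => Cplus (RtoC a) (Cmult z (peval q z))
  end.

Definition eiw (w : R) : C := (cos w, sin w).

Definition kappa (eta phi : list R) (z : C) : C := Cdiv (peval eta z) (peval phi z).

Definition invertible_ARMA (eta phi : list R) : Prop :=
  (forall z : C, peval eta z = RtoC 0 -> Cmod z > 1) /\
  (forall z : C, peval phi z = RtoC 0 -> Cmod z > 1) /\
  (forall z : C, ~ (peval eta z = RtoC 0 /\ peval phi z = RtoC 0)) /\
  kappa eta phi (RtoC 0) = RtoC 1.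

Definition spec_dens (sigma2 : R) (eta phi : list R) (w : R) : R :=
  sigma2 / (2 * PI) * (Cmod (kappa eta phi (eiw w))) ^ 2.

Definition f_tb (sigma2 : R) (eta phi : list R) (theta beta : R) : C :=
  Copp (RInt (V := C_R_CompleteNormedModule)
    (fun w : R =>
       Cmult
         (Cdiv (Cplus (eiw w) (RtoC (beta * theta)))
               (RtoC ((Cmod (Cmult (Cplus (RtoC 1) (Cmult (RtoC theta) (eiw w)))
                                   (Cplus (RtoC 1) (Cmult (RtoC (beta * theta)) (eiw w))))) ^ 2)))
         (RtoC (spec_dens sigma2 eta phi w)))
    (- PI) PI).

(* Main.v *)
Require Import Defs.
From Stdlib Require Import Reals List Lra Lia Classical.
From Coquelicot Require Import Coquelicot.
Open Scope R_scope.

Fixpoint reval (p : list R) (x : R) : R :=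
  match p with nil => 0 | a :: q => a + x * reval q x end.

Fixpoint padd (p q : list R) : list R :=
  match p, q with
  | nil, _ => q
  | _, nil => p
  | a :: p', b :: q' => (a + b) :: padd p' q'
  end.
Lemma reval_padd p q x : reval (padd p q) x = reval p x + reval q x.
Proof.
revert q; induction p as [|a p IH]; intros [|b q]; simpl; try ring.
rewrite IH. ring.
Qed.
Definition pscal (c : R) (p : list R) := map (Rmult c) p.
Lemma reval_pscal c p x : reval (pscal c p) x = c * reval p x.
Proof. induction p as [|a p IH]; simpl; [ring|]. unfold pscal in *. simpl. rewrite IH. ring. Qed.
Fixpoint pmul (p q : list R) : list R :=
  match p with nil => nil | a :: p' => padd (pscal a q) (0 :: pmul p' q) end.
Lemma reval_pmul p q x : reval (pmul p q) x = reval p x * reval q x.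
Proof.
induction p as [|a p IH]; simpl; [ring|]. rewrite reval_padd, reval_pscal. simpl. rewrite IH. ring.
Qed.
Fixpoint pcs (c : R) (p : list R) : list R :=
  match p with nil => nil | a :: q => a :: pscal c (pcs c q) end.
Lemma reval_pcs c p x : reval (pcs c p) x = reval p (c * x).
Proof. induction p as [|a p IH]; simpl; [ring|]. rewrite reval_pscal, IH. ring. Qed.
Fixpoint pder (p : list R) : list R :=
  match p with nil => nil | a :: q => padd q (0 :: pder q) end.
Lemma reval_pder p x : is_derive (reval p) x (reval (pder p) x).
Proof.
apply is_derive_Reals.
induction p as [|a q IH]; simpl.
- apply derivable_pt_lim_const.
- rewrite reval_padd. simpl.
  replace (reval q x + (0 + x * reval (pder q) x)) with
     (0 + (1 * reval q x + x * reval (pder q) x)) by ring.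
  apply (derivable_pt_lim_plus (fun _ => a) (fun t => t * reval q t)).
  apply derivable_pt_lim_const.
  apply (derivable_pt_lim_mult (fun t => t) (reval q)). apply derivable_pt_lim_id. apply IH.
Qed.

Lemma reval_peval p x : peval p (RtoC x) = RtoC (reval p x).
Proof.
induction p as [|a p IH]; simpl; auto. rewrite IH.
unfold Cplus, Cmult, RtoC; simpl. f_equal; ring.
Qed.

Definition PolyFun (f : R -> R) := exists l, forall x, f x = reval l x.

Lemma PF_const c : PolyFun (fun _ => c).
Proof. exists (c :: nil). intros; simpl; ring. Qed.
Lemma PF_id : PolyFun (fun x => x).
Proof. exists (0 :: 1 :: nil). intros; simpl; ring. Qed.
Lemma PF_plus f g : PolyFun f -> PolyFun g -> PolyFun (fun x => f x + g x).
Proof. intros [l Hl] [m Hm]. exists (padd l m). intros; rewrite reval_padd, Hl, Hm; auto. Qed.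
Lemma PF_mult f g : PolyFun f -> PolyFun g -> PolyFun (fun x => f x * g x).
Proof. intros [l Hl] [m Hm]. exists (pmul l m). intros; rewrite reval_pmul, Hl, Hm; auto. Qed.
Lemma PF_ext f g : (forall x, f x = g x) -> PolyFun f -> PolyFun g.
Proof. intros E [l Hl]. exists l. intros; rewrite <- E; auto. Qed.
Lemma PF_reval l : PolyFun (reval l).
Proof. exists l; auto. Qed.
Lemma PF_opp f : PolyFun f -> PolyFun (fun x => - f x).
Proof. intros H. apply PF_ext with (fun x => (-1) * f x). intros; ring.
  apply PF_mult; auto. apply PF_const. Qed.
Lemma PF_minus f g : PolyFun f -> PolyFun g -> PolyFun (fun x => f x - g x).
Proof. intros. apply PF_plus; auto. apply PF_opp; auto. Qed.
Lemma PF_lin f c : PolyFun f -> PolyFun (fun x => f (c * x)).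
Proof. intros [l Hl]. exists (pcs c l). intros; rewrite reval_pcs; auto. Qed.
Lemma PF_deriv f : PolyFun f -> exists f', PolyFun f' /\ forall x, is_derive f x (f' x).
Proof.
intros [l Hl]. exists (reval (pder l)). split. apply PF_reval.
intros x. apply is_derive_ext with (reval l). intros; auto. apply reval_pder.
Qed.

Fixpoint sdiv (r : R) (p : list R) : list R :=
  match p with
  | nil => nil
  | a :: q => match q with nil => nil | _ => reval q r :: sdiv r q end
  end.
Lemma sdiv_len r p : length (sdiv r p) = pred (length p).
Proof. induction p as [|a q IH]; simpl; auto. destruct q as [|b q']; simpl; auto. Qed.
Lemma reval_sdiv r p x : reval p x = (x - r) * reval (sdiv r p) x + reval p r.
Proof.
induction p as [|a q IH]; simpl. ring.
destruct q as [|b q']. simpl. ring.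
simpl in IH |- *. rewrite IH. ring.
Qed.

Lemma roots_finite_aux (N : nat) : forall p, (length p <= N)%nat -> forall x0, reval p x0 <> 0 ->
  exists l, forall x, reval p x = 0 -> In x l.
Proof.
induction N as [|N IH]; intros p Hlen x0 Hx0.
- destruct p; simpl in *; [elim Hx0; auto | lia].
- destruct (classic (exists r, reval p r = 0)) as [[r Hr]|Hn].
  + destruct (IH (sdiv r p)) with (x0 := x0) as [l Hl].
    * rewrite sdiv_len. destruct p; simpl in *; lia.
    * intros E. apply Hx0. rewrite (reval_sdiv r p x0), E, Hr. ring.
    * exists (r :: l). intros x Hx. rewrite (reval_sdiv r p x), Hr in Hx.
      destruct (Req_dec x r) as [E|E]. left; auto. right. apply Hl.
      rewrite Rplus_0_r in Hx. apply Rmult_integral in Hx. destruct Hx as [Hx|Hx]; auto. lra.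
  + exists nil. intros x Hx. apply Hn. exists x; auto.
Qed.

Lemma roots_finite f x0 : PolyFun f -> f x0 <> 0 -> exists l, forall x, f x = 0 -> In x l.
Proof.
intros [p Hp] H. rewrite Hp in H. destruct (roots_finite_aux (length p) p (le_n _) x0 H) as [l Hl].
exists l. intros x Hx. apply Hl. rewrite <- Hp; auto.
Qed.

Fixpoint pevalC (p : list C) (z : C) : C :=
  match p with nil => RtoC 0 | a :: q => Cplus a (Cmult z (pevalC q z)) end.

Module FTA.
From mathcomp Require Import all_boot all_algebra.
From mathcomp Require Import Rstruct complex.
Import GRing.Theory.
Local Open Scope ring_scope.
Definition toc (c : C) : R[i] := Complex (fst c) (snd c).
Definition ofc (c : R[i]) : C := (complex.Re c, complex.Im c).
Lemma toc_add a b : toc (Cplus a b) = toc a + toc b.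
Proof. destruct a, b. reflexivity. Qed.
Lemma toc_mul a b : toc (Cmult a b) = toc a * toc b.
Proof. destruct a, b. reflexivity. Qed.
Lemma ofcK x : toc (ofc x) = x. Proof. by case: x. Qed.
Lemma tocK x : ofc (toc x) = x. Proof. by case: x. Qed.
Lemma horner_eq (l : list C) z : (Poly (map toc l)).[toc z] = toc (pevalC l z).
Proof.
elim: l => [|a l IH] /=. by rewrite horner0.
rewrite horner_cons IH toc_add toc_mul. by rewrite addrC mulrC.
Qed.
Lemma nth_eq (l : list C) k : List.nth k l (RtoC 0) = ofc (seq.nth 0 (map toc l) k).
Proof. elim: l k => [|a l IH] [|k] //=. by rewrite tocK. Qed.
Lemma fta (l : list C) : (exists z, pevalC l z = RtoC 0) \/
   (forall k, List.nth (S k) l (RtoC 0) = RtoC 0).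
Proof.
have [H|H] := boolP (size (Poly (map toc l)) <= 1)%N.
- right => k.
  have : (Poly (map toc l))`_k.+1 = 0.
    apply: nth_default. exact: leq_trans H _.
  rewrite coef_Poly nth_eq => ->. reflexivity.
- left. have : size (Poly (map toc l)) != 1%N.
    by apply: contra H => /eqP ->.
  move=> /closed_rootP [x Hx].
  exists (ofc x). move: Hx => /rootP. rewrite -(ofcK x) horner_eq ofcK => E.
  by rewrite -(tocK (pevalC l (ofc x))) E.
Qed.
End FTA.

Fixpoint LC (p : list C) (nu : nat -> C) (n : nat) : C :=
  match p with nil => RtoC 0 | a :: q => Cplus (Cmult a (nu n)) (LC q nu (S n)) end.

Fixpoint sdivC (r : C) (p : list C) : list C :=
  match p with
  | nil => nil
  | a :: q => match q with nil => nil | _ => pevalC q r :: sdivC r q end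
  end.

Lemma sdivC_len r p : length (sdivC r p) = pred (length p).
Proof.
induction p as [|a q IH]; simpl; auto.
destruct q as [|b q']; simpl; auto.
Qed.

Lemma peval_sdivC r p x : pevalC p x = ((x - r) * pevalC (sdivC r p) x + pevalC p r)%C.
Proof.
induction p as [|a q IH]; simpl. ring.
destruct q as [|b q']. simpl. ring.
simpl in IH |- *. rewrite IH. ring.
Qed.

Lemma LC_sdiv r p nu n :
  LC p nu n = (LC (sdivC r p) nu (S n) - r * LC (sdivC r p) nu n + pevalC p r * nu n)%C.
Proof.
revert n. induction p as [|a q IH]; intros n; simpl. ring.
destruct q as [|b q']. simpl. ring.
simpl in IH |- *. rewrite (IH (S n)). ring.
Qed.

Definition BndC (nu : nat -> C) := exists B, forall n, Cmod (nu n) <= B.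

Lemma LC_bnd p nu : BndC nu -> BndC (LC p nu).
Proof.
intros [B HB]. induction p as [|a q IH].
- exists 0. intros n. simpl. rewrite Cmod_0. lra.
- destruct IH as [B' HB']. exists (Cmod a * B + B'). intros n. simpl.
  eapply Rle_trans. apply Cmod_triangle. rewrite Cmod_mult.
  apply Rplus_le_compat; auto. apply Rmult_le_compat_l. apply Cmod_ge_0. auto.
Qed.

Lemma bernoulli (x : R) (n : nat) : 0 <= x -> 1 + INR n * x <= (1 + x) ^ n.
Proof.
intros Hx. induction n as [|n IH]. simpl. lra.
rewrite S_INR. simpl.
assert (0 <= INR n * x * x) by (apply Rmult_le_pos; [apply Rmult_le_pos; auto; apply pos_INR|auto]).
nra.
Qed.

Lemma geom_zero (y : nat -> C) (r : C) : (forall n, y (S n) = (r * y n)%C) -> Cmod r > 1 ->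
  BndC y -> forall n, y n = RtoC 0.
Proof.
intros Hrec Hr [B HB].
assert (Hy : forall n, y n = (r ^ n * y 0%nat)%C).
{ induction n. simpl. ring. rewrite Hrec, IHn. simpl. ring. }
assert (H0 : y 0%nat = RtoC 0).
{ destruct (Ceq_dec (y 0%nat) (RtoC 0)) as [E|E]; auto. exfalso.
  apply Cmod_gt_0 in E. set (m := Cmod (y 0%nat)) in *.
  assert (HB0 : 0 <= B). { eapply Rle_trans. apply Cmod_ge_0. apply (HB 0%nat). }
  assert (Hmr : 0 < m * (Cmod r - 1)) by (apply Rmult_lt_0_compat; lra).
  destruct (INR_archimed (m * (Cmod r - 1)) B Hmr) as [k Hk0].
  specialize (HB k). rewrite Hy, Cmod_mult, Cmod_pow in HB. fold m in HB.
  pose proof (bernoulli (Cmod r - 1) k ltac:(lra)).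
  replace (1 + (Cmod r - 1)) with (Cmod r) in H by ring.
  assert (INR k * (m * (Cmod r - 1)) <= Cmod r ^ k * m) by nra.
  lra. }
intros n. rewrite Hy, H0. ring.
Qed.

Lemma LC_zero_coefs q nu n : (forall k, nth k q (RtoC 0) = RtoC 0) -> LC q nu n = RtoC 0.
Proof.
revert n. induction q as [|a q IH]; intros n Hq; simpl; auto.
pose proof (Hq 0%nat) as H0. simpl in H0. rewrite IH, H0. ring. intros k. apply (Hq (S k)).
Qed.
Lemma peval_zero_coefs q x : (forall k, nth k q (RtoC 0) = RtoC 0) -> pevalC q x = RtoC 0.
Proof.
induction q as [|a q IH]; intros Hq; simpl; auto.
pose proof (Hq 0%nat) as H0. simpl in H0. rewrite IH, H0. ring. intros k. apply (Hq (S k)).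
Qed.

Lemma rec_zero_C_aux (N : nat) : forall (p : list C) (nu : nat -> C), (length p <= N)%nat ->
  BndC nu -> (forall n, LC p nu n = RtoC 0) ->
  (forall z, pevalC p z = RtoC 0 -> Cmod z > 1) -> (exists x, pevalC p x <> RtoC 0) ->
  forall n, nu n = RtoC 0.
Proof.
induction N as [|N IH]; intros p nu Hlen Hb HL Hroot [x Hx].
- destruct p; simpl in *; [elim Hx; auto | lia].
- destruct (FTA.fta p) as [[r Hr]|Hc].
  + set (q := sdivC r p).
    assert (Hy : forall n, LC q nu n = RtoC 0).
    { apply geom_zero with (r := r).
      - intros n. specialize (HL n). rewrite (LC_sdiv r p nu n), Hr in HL.
        fold q in HL.
        assert (E: LC q nu (S n) = (LC q nu (S n) - r * LC q nu n + 0 * nu n + r * LC q nu n)%C) by ring.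
        rewrite E, HL. ring.
      - apply Hroot; auto.
      - apply LC_bnd; auto. }
    apply (IH q nu).
    * unfold q. rewrite sdivC_len. destruct p; simpl in *; lia.
    * auto.
    * auto.
    * intros z Hz. apply Hroot. rewrite (peval_sdivC r p z), Hr. fold q. rewrite Hz. ring.
    * exists x. intros E. apply Hx. rewrite (peval_sdivC r p x), Hr. fold q. rewrite E. ring.
  + destruct p as [|a q]. simpl in Hx. elim Hx; auto.
    assert (Hq : forall k, nth k q (RtoC 0) = RtoC 0) by (intros k; apply (Hc k)).
    assert (Ha : a <> RtoC 0).
    { intros E. apply Hx. simpl. rewrite peval_zero_coefs, E; auto. ring. }
    intros n. specialize (HL n). simpl in HL. rewrite LC_zero_coefs in HL; auto.
    apply (f_equal (fun u => Cmult (Cinv a) u)) in HL.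
    replace (/ a * (a * nu n + 0))%C with (nu n) in HL by (field; auto).
    rewrite HL. ring.
Qed.

Definition RI (f : R -> R) : R := RInt f (-PI) PI.
Definition Cont (f : R -> R) := forall x, continuity_pt f x.

Lemma Cont_exRInt f a b : Cont f -> ex_RInt f a b.
Proof.
intros H. apply (ex_RInt_continuous (V := R_CompleteNormedModule)). intros z _. apply continuity_pt_filterlim. apply H.
Qed.

Lemma Cont_const c : Cont (fun _ => c).
Proof. intros x. apply continuity_pt_const. intros a b; auto. Qed.
Lemma Cont_plus f g : Cont f -> Cont g -> Cont (fun x => f x + g x).
Proof. intros Hf Hg x. apply (continuity_pt_plus f g); auto. Qed.
Lemma Cont_minus f g : Cont f -> Cont g -> Cont (fun x => f x - g x).
Proof. intros Hf Hg x. apply (continuity_pt_minus f g); auto. Qed.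
Lemma Cont_mult f g : Cont f -> Cont g -> Cont (fun x => f x * g x).
Proof. intros Hf Hg x. apply (continuity_pt_mult f g); auto. Qed.
Lemma Cont_opp f : Cont f -> Cont (fun x => - f x).
Proof. intros Hf x. apply (continuity_pt_opp f); auto. Qed.
Lemma Cont_inv f : Cont f -> (forall x, f x <> 0) -> Cont (fun x => / f x).
Proof. intros Hf Hn x. apply (continuity_pt_inv f); auto. Qed.
Lemma Cont_div f g : Cont f -> Cont g -> (forall x, g x <> 0) -> Cont (fun x => f x / g x).
Proof. intros Hf Hg Hn x. apply (continuity_pt_div f g); auto. Qed.
Lemma Cont_id : Cont (fun x => x).
Proof. intros x. apply continuity_pt_id. Qed.
Lemma Cont_cos_lin t : Cont (fun w => cos (t * w)).
Proof.
intros x. apply (continuity_pt_comp (fun w => t * w) cos).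
apply (continuity_pt_mult (fun _ => t) (fun w => w)). apply continuity_pt_const; intros a b; auto.
apply continuity_pt_id. apply continuity_cos.
Qed.
Lemma Cont_sin_lin t : Cont (fun w => sin (t * w)).
Proof.
intros x. apply (continuity_pt_comp (fun w => t * w) sin).
apply (continuity_pt_mult (fun _ => t) (fun w => w)). apply continuity_pt_const; intros a b; auto.
apply continuity_pt_id. apply continuity_sin.
Qed.
Lemma Cont_cos : Cont cos.
Proof. intros x. apply continuity_cos. Qed.
Lemma Cont_sin : Cont sin.
Proof. intros x. apply continuity_sin. Qed.
Lemma Cont_ext f g : (forall x, f x = g x) -> Cont f -> Cont g.
Proof. intros E H x. apply continuity_pt_ext with f; auto. Qed.

Lemma RI_plus f g : Cont f -> Cont g -> RI (fun x => f x + g x) = RI f + RI g.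
Proof. intros Hf Hg. unfold RI. apply (RInt_plus f g); apply Cont_exRInt; auto. Qed.
Lemma RI_minus f g : Cont f -> Cont g -> RI (fun x => f x - g x) = RI f - RI g.
Proof. intros Hf Hg. unfold RI. apply (RInt_minus f g); apply Cont_exRInt; auto. Qed.
Lemma RI_scal c f : Cont f -> RI (fun x => c * f x) = c * RI f.
Proof. intros Hf. unfold RI. apply (RInt_scal f). apply Cont_exRInt; auto. Qed.
Lemma RI_ext f g : (forall x, f x = g x) -> RI f = RI g.
Proof. intros E. unfold RI. apply RInt_ext. intros; auto. Qed.
Lemma RI_const c : RI (fun _ => c) = 2 * PI * c.
Proof. unfold RI. rewrite RInt_const. unfold scal; simpl. unfold mult; simpl. ring. Qed.
Lemma RI_le f g : Cont f -> Cont g -> (forall x, -PI < x < PI -> f x <= g x) -> RI f <= RI g.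
Proof.
intros Hf Hg H. unfold RI. apply RInt_le. pose proof PI_RGT_0; lra.
apply Cont_exRInt; auto. apply Cont_exRInt; auto. intros; auto.
Qed.
Lemma RI_abs f : Cont f -> Rabs (RI f) <= RI (fun x => Rabs (f x)).
Proof.
intros Hf. unfold RI. apply abs_RInt_le. pose proof PI_RGT_0; lra. apply Cont_exRInt; auto.
Qed.
Lemma Cont_abs f : Cont f -> Cont (fun x => Rabs (f x)).
Proof. intros Hf x. apply (continuity_pt_comp f Rabs); auto. apply Rcontinuity_abs. Qed.

Fixpoint fsum (f : nat -> R) (N : nat) : R :=
  match N with O => 0 | S n => fsum f n + f n end.

Lemma Cont_fsum (F : nat -> R -> R) N : (forall n, Cont (F n)) -> Cont (fun x => fsum (fun n => F n x) N).
Proof.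
intros H. induction N as [|N IH]; simpl. apply Cont_const. apply Cont_plus; auto.
Qed.
Lemma RI_fsum (F : nat -> R -> R) N : (forall n, Cont (F n)) ->
  RI (fun x => fsum (fun n => F n x) N) = fsum (fun n => RI (F n)) N.
Proof.
intros H. induction N as [|N IH]; simpl.
- rewrite RI_const. ring.
- rewrite RI_plus; auto. rewrite IH; auto. apply Cont_fsum; auto.
Qed.

Lemma sin_nat_PI m : sin (INR m * PI) = 0.
Proof.
induction m as [|m IH]. simpl. rewrite Rmult_0_l. apply sin_0.
rewrite S_INR. replace ((INR m + 1) * PI) with (INR m * PI + PI) by ring.
rewrite neg_sin. rewrite IH. ring.
Qed.

Lemma RI_cos_nat (m : nat) : (0 < m)%nat -> RI (fun w => cos (INR m * w)) = 0.
Proof.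
intros Hm. unfold RI.
assert (Hm' : INR m <> 0) by (apply not_0_INR; lia).
assert (H := is_RInt_derive (fun w => sin (INR m * w) / INR m) (fun w => cos (INR m * w)) (-PI) PI).
assert (H1 : forall x, Rmin (- PI) PI <= x <= Rmax (- PI) PI -> is_derive (fun w : R => sin (INR m * w) / INR m) x (cos (INR m * x))).
{ intros x _. auto_derive. auto. field. auto. }
assert (H2 : forall x, Rmin (- PI) PI <= x <= Rmax (- PI) PI -> continuous (fun w : R => cos (INR m * w)) x).
{ intros x _. apply continuity_pt_filterlim. apply Cont_cos_lin. }
rewrite (is_RInt_unique _ _ _ _ (H H1 H2)).
unfold minus, plus, opp; simpl. replace (INR m * - PI) with (- (INR m * PI)) by ring.
  rewrite sin_neg, sin_nat_PI. field; auto.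
Qed.

Ltac cont_step := match goal with
 | |- Cont (fun _ => ?c) => apply Cont_const
 | |- Cont (fun x => x) => apply Cont_id
 | |- Cont (fun x => @?f x + @?g x) => apply (Cont_plus f g)
 | |- Cont (fun x => @?f x - @?g x) => apply (Cont_minus f g)
 | |- Cont (fun x => @?f x * @?g x) => apply (Cont_mult f g)
 | |- Cont (fun x => @?f x / @?g x) => apply (Cont_div f g)
 | |- Cont (fun x => - @?f x) => apply (Cont_opp f)
 | |- Cont (fun x => cos (?t * x)) => apply (Cont_cos_lin t)
 | |- Cont (fun x => sin (?t * x)) => apply (Cont_sin_lin t)
 | |- Cont (fun x => cos x) => apply Cont_cos
 | |- Cont (fun x => sin x) => apply Cont_sin
 | |- Cont cos => apply Cont_cos
 | |- Cont sin => apply Cont_sin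
 end.
Ltac cont := repeat cont_step; try assumption.

Fixpoint lsumk (p : list R) (h : nat -> R) (k : nat) : R :=
  match p with nil => 0 | a :: q => a * h k + lsumk q h (S k) end.
Definition lsum p h := lsumk p h 0.

Lemma lsumk_plus p f g k : lsumk p (fun j => f j + g j) k = lsumk p f k + lsumk p g k.
Proof. revert k; induction p as [|a q IH]; intros k; simpl; [ring|]. rewrite IH. ring. Qed.
Lemma lsumk_scal p c f k : lsumk p (fun j => c * f j) k = c * lsumk p f k.
Proof. revert k; induction p as [|a q IH]; intros k; simpl; [ring|]. rewrite IH. ring. Qed.
Lemma lsumk_mult_r p f k X : lsumk p f k * X = lsumk p (fun j => f j * X) k.
Proof. revert k; induction p as [|a q IH]; intros k; simpl; [ring|]. rewrite <- IH. ring. Qed.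
Lemma lsumk_ext p f g k : (forall j, f j = g j) -> lsumk p f k = lsumk p g k.
Proof. intros E. revert k; induction p as [|a q IH]; intros k; simpl; [ring|]. rewrite IH, E. ring. Qed.
Lemma lsumk_ext_rng p f g k : (forall j, (k <= j < k + length p)%nat -> f j = g j) -> lsumk p f k = lsumk p g k.
Proof.
revert k; induction p as [|a q IH]; intros k E; simpl; [ring|].
rewrite IH, E. ring. simpl; lia. intros j Hj. apply E. simpl; lia.
Qed.
Lemma lsumk_zero p k : lsumk p (fun _ => 0) k = 0.
Proof. revert k; induction p as [|a q IH]; intros k; simpl; [ring|]. rewrite IH. ring. Qed.
Lemma lsumk_swap p q F k l :
  lsumk p (fun i => lsumk q (fun j => F i j) l) k = lsumk q (fun j => lsumk p (fun i => F i j) k) l.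
Proof.
revert k; induction p as [|a p' IH]; intros k; simpl.
- rewrite lsumk_zero. auto.
- rewrite IH. rewrite <- lsumk_scal. rewrite <- lsumk_plus. apply lsumk_ext. intros; auto.
Qed.
Lemma lsumk_shift p h k : lsumk p h (S k) = lsumk p (fun j => h (S j)) k.
Proof. revert k; induction p as [|a q IH]; intros k; simpl; [ring|]. rewrite IH. auto. Qed.
Lemma lsumk_shift0 p h k : lsumk p h k = lsumk p (fun j => h (k + j)%nat) 0.
Proof.
revert h. induction k as [|k IH]; intros h. apply lsumk_ext; intros; simpl; auto.
rewrite lsumk_shift, IH. apply lsumk_ext. intros j. f_equal; try lia.
Qed.
Lemma Cont_lsumk p (F : nat -> R -> R) k : (forall j, Cont (F j)) -> Cont (fun w => lsumk p (fun j => F j w) k).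
Proof.
intros H. revert k; induction p as [|a q IH]; intros k; simpl. apply Cont_const.
apply Cont_plus; auto. apply Cont_mult; auto. apply Cont_const.
Qed.
Lemma RI_lsumk p (F : nat -> R -> R) k : (forall j, Cont (F j)) ->
  RI (fun w => lsumk p (fun j => F j w) k) = lsumk p (fun j => RI (F j)) k.
Proof.
intros H. revert k; induction p as [|a q IH]; intros k; simpl. rewrite RI_const; ring.
rewrite RI_plus, RI_scal, IH; auto. apply Cont_mult; auto. apply Cont_const. apply Cont_lsumk; auto.
Qed.
Lemma lsumk_bound p h k B : (forall j, Rabs (h j) <= B) ->
  Rabs (lsumk p h k) <= lsumk (map Rabs p) (fun _ => B) k.
Proof.
intros H. revert k; induction p as [|a q IH]; intros k; simpl. rewrite Rabs_R0; lra.
eapply Rle_trans. apply Rabs_triang. rewrite Rabs_mult. apply Rplus_le_compat; auto.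
apply Rmult_le_compat_l. apply Rabs_pos. auto.
Qed.

Lemma eiw_mult s t : Cmult (eiw s) (eiw t) = eiw (s + t).
Proof. unfold eiw, Cmult; simpl. rewrite cos_plus, sin_plus. f_equal; ring. Qed.

Lemma peval_E p w k : Cmult (eiw (INR k * w)) (peval p (eiw w)) =
  (lsumk p (fun j => cos (INR j * w)) k, lsumk p (fun j => sin (INR j * w)) k).
Proof.
revert k; induction p as [|a q IH]; intros k; simpl.
- unfold Cmult, RtoC; simpl. f_equal; ring.
- assert (E : Cmult (eiw (INR k * w)) (Cplus (RtoC a) (Cmult (eiw w) (peval q (eiw w)))) =
     Cplus (Cmult (RtoC a) (eiw (INR k * w))) (Cmult (Cmult (eiw (INR k * w)) (eiw w)) (peval q (eiw w)))) by ring.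
  rewrite E, eiw_mult. replace (INR k * w + w) with (INR (S k) * w) by (rewrite S_INR; ring).
  rewrite IH. unfold Cplus, Cmult, RtoC, eiw; simpl. f_equal; ring.
Qed.

Lemma peval_circ p w : peval p (eiw w) =
  (lsum p (fun j => cos (INR j * w)), lsum p (fun j => sin (INR j * w))).
Proof.
unfold lsum. rewrite <- (peval_E p w 0). simpl. rewrite Rmult_0_l. unfold eiw. rewrite cos_0, sin_0.
set (P := peval p (cos w, sin w)). destruct P as [u v]. unfold Cmult; simpl. f_equal; ring.
Qed.

Definition Mf (p : list R) (w : R) := fst (peval p (eiw w)) ^ 2 + snd (peval p (eiw w)) ^ 2.

Lemma Mf_eq p w : Mf p w = lsum p (fun k => lsum p (fun l => cos ((INR k - INR l) * w))).
Proof.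
unfold Mf. rewrite peval_circ. simpl fst; simpl snd. unfold lsum.
rewrite <- !Rsqr_pow2. unfold Rsqr. rewrite !lsumk_mult_r. rewrite <- lsumk_plus. apply lsumk_ext. intros k.
rewrite <- !lsumk_scal. rewrite <- lsumk_plus. apply lsumk_ext. intros l.
replace ((INR k - INR l) * w) with (INR k * w - INR l * w) by ring. rewrite cos_minus. ring.
Qed.

Lemma Cont_Mf p : Cont (Mf p).
Proof.
apply Cont_ext with (fun w => lsum p (fun k => lsum p (fun l => cos ((INR k - INR l) * w)))).
intros; rewrite Mf_eq; auto.
unfold lsum. apply Cont_lsumk. intros j. apply Cont_lsumk. intros l. apply Cont_cos_lin.
Qed.

Lemma Cmod_eiw w : Cmod (eiw w) = 1.
Proof. unfold Cmod, eiw; simpl. pose proof (sin2_cos2 w) as e. unfold Rsqr in e.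
 replace (cos w * (cos w * 1) + sin w * (sin w * 1)) with 1 by lra. apply sqrt_1. Qed.

Lemma LC_map p nu n : LC (map RtoC p) (fun k => RtoC (nu k)) n = RtoC (lsumk p nu n).
Proof.
revert n; induction p as [|a q IH]; intros n; simpl; auto.
rewrite IH. unfold Cplus, Cmult, RtoC; simpl. f_equal; ring.
Qed.
Lemma pevalC_map p z : pevalC (map RtoC p) z = peval p z.
Proof. induction p as [|a q IH]; simpl; auto. rewrite IH; auto. Qed.

Lemma rec_zero_R (p : list R) (nu : nat -> R) : (exists B, forall n, Rabs (nu n) <= B) ->
  (forall n, lsumk p nu n = 0) -> (forall z, peval p z = RtoC 0 -> Cmod z > 1) ->
  (exists x, peval p x <> RtoC 0) -> forall n, nu n = 0.
Proof.
intros [B HB] HL Hr [x Hx] n.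
assert (H := rec_zero_C_aux (length (map RtoC p)) (map RtoC p) (fun k => RtoC (nu k)) (le_n _)).
assert (E : RtoC (nu n) = RtoC 0).
{ apply H.
  - exists B. intros k. rewrite Cmod_R. auto.
  - intros k. rewrite LC_map, HL. auto.
  - intros z Hz. apply Hr. rewrite <- pevalC_map; auto.
  - exists x. rewrite pevalC_map; auto. }
apply (f_equal fst) in E. simpl in E. auto.
Qed.

Definition gf s2 eta phi w := spec_dens s2 eta phi w.

Lemma peval_circ_nz p w : (forall z, peval p z = RtoC 0 -> Cmod z > 1) -> peval p (eiw w) <> RtoC 0.
Proof. intros H E. apply H in E. rewrite Cmod_eiw in E. lra. Qed.

Lemma Mf_pos p w : peval p (eiw w) <> RtoC 0 -> Mf p w > 0.
Proof.
unfold Mf. destruct (peval p (eiw w)) as [u v]. simpl. intros H.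
destruct (Req_dec u 0) as [Hu|Hu]; [destruct (Req_dec v 0) as [Hv|Hv]|].
- subst. elim H. reflexivity.
- assert (0 < v * v) by (apply Rsqr_pos_lt; auto). nra.
- assert (0 < u * u) by (apply Rsqr_pos_lt; auto). nra.
Qed.

Lemma Cmod_sq x : Cmod x ^ 2 = fst x ^ 2 + snd x ^ 2.
Proof. unfold Cmod. rewrite pow2_sqrt; auto. nra. Qed.

Lemma g_eq s2 eta phi w : invertible_ARMA eta phi ->
  gf s2 eta phi w = s2 / (2 * PI) * (Mf eta w / Mf phi w).
Proof.
intros [He [Hp _]]. unfold gf, spec_dens, kappa.
pose proof (peval_circ_nz phi w Hp) as Hn.
rewrite Cmod_div; auto. unfold Rdiv at 2. rewrite Rpow_mult_distr, pow_inv, !Cmod_sq. unfold Mf. reflexivity.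
Qed.

Lemma Mf_phi_pos eta phi w : invertible_ARMA eta phi -> Mf phi w > 0.
Proof. intros [He [Hp _]]. apply Mf_pos. apply peval_circ_nz; auto. Qed.
Lemma Mf_eta_pos eta phi w : invertible_ARMA eta phi -> Mf eta w > 0.
Proof. intros [He [Hp _]]. apply Mf_pos. apply peval_circ_nz; auto. Qed.

Lemma Cont_g s2 eta phi : invertible_ARMA eta phi -> Cont (gf s2 eta phi).
Proof.
intros HA. apply Cont_ext with (fun w => s2 / (2 * PI) * (Mf eta w / Mf phi w)).
intros; rewrite g_eq; auto.
apply Cont_mult. apply Cont_const. apply Cont_div; try apply Cont_Mf.
intros x. apply Rgt_not_eq. apply (Mf_phi_pos eta phi x HA).
Qed.

Lemma g_pos s2 eta phi w : s2 > 0 -> invertible_ARMA eta phi -> gf s2 eta phi w > 0.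
Proof.
intros Hs HA. rewrite g_eq; auto. pose proof PI_RGT_0.
pose proof (Mf_phi_pos eta phi w HA). pose proof (Mf_eta_pos eta phi w HA).
apply Rmult_lt_0_compat. apply Rdiv_lt_0_compat; lra. apply Rdiv_lt_0_compat; lra.
Qed.

Lemma g_Mphi s2 eta phi w : invertible_ARMA eta phi ->
  gf s2 eta phi w * Mf phi w = s2 / (2 * PI) * Mf eta w.
Proof.
intros HA. rewrite g_eq; auto. pose proof (Mf_phi_pos eta phi w HA). pose proof PI_RGT_0. field. repeat split; lra.
Qed.

Definition Gm s2 eta phi t := RI (fun w => gf s2 eta phi w * cos (t * w)) / (2 * PI).

Lemma Gm_bound s2 eta phi t : s2 > 0 -> invertible_ARMA eta phi -> Rabs (Gm s2 eta phi t) <= Gm s2 eta phi 0.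
Proof.
intros Hs HA. unfold Gm. pose proof PI_RGT_0 as Hpi.
assert (Cg := Cont_g s2 eta phi HA).
unfold Rdiv. rewrite Rabs_mult, (Rabs_right (/ (2 * PI))).
2: { apply Rle_ge, Rlt_le, Rinv_0_lt_compat; lra. }
apply Rmult_le_compat_r. apply Rlt_le, Rinv_0_lt_compat; lra.
eapply Rle_trans. apply RI_abs. apply Cont_mult; auto. apply Cont_cos_lin.
apply RI_le. apply Cont_abs, Cont_mult; auto. apply Cont_cos_lin.
apply Cont_mult; auto. apply Cont_cos_lin.
intros x _. rewrite Rmult_0_l, cos_0, Rmult_1_r, Rabs_mult.
pose proof (g_pos s2 eta phi x Hs HA). rewrite Rabs_right; [|lra].
pose proof (COS_bound (t * x)). assert (Rabs (cos (t * x)) <= 1) by (apply Rabs_le; lra).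
nra.
Qed.

Definition nu s2 eta phi n := lsum phi (fun l => Gm s2 eta phi (INR n - INR l)).

Lemma cos_prod a b : cos a * cos b = (cos (a + b) + cos (a - b)) / 2.
Proof. rewrite cos_plus, cos_minus. field. Qed.

Lemma RI_g_cos_cos s2 eta phi a b : invertible_ARMA eta phi ->
  RI (fun w => gf s2 eta phi w * (cos (a * w) * cos (b * w))) =
  PI * (Gm s2 eta phi (a + b) + Gm s2 eta phi (a - b)).
Proof.
intros HA. pose proof PI_RGT_0. assert (Cg := Cont_g s2 eta phi HA).
rewrite (RI_ext _ (fun w => / 2 * (gf s2 eta phi w * cos ((a + b) * w) + gf s2 eta phi w * cos ((a - b) * w)))).
2: { intros w. rewrite cos_prod. replace (a * w + b * w) with ((a + b) * w) by ring.
     replace (a * w - b * w) with ((a - b) * w) by ring. field. }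
rewrite RI_scal, RI_plus. unfold Gm. field. lra.
all: try apply Cont_plus; apply Cont_mult; auto; apply Cont_cos_lin.
Qed.

Lemma Cont_gcos s2 eta phi t : invertible_ARMA eta phi -> Cont (fun w => gf s2 eta phi w * cos (t * w)).
Proof. intros HA. apply Cont_mult. apply Cont_g; auto. apply Cont_cos_lin. Qed.

Lemma LR_nu_eq s2 eta phi n : invertible_ARMA eta phi ->
  lsumk phi (nu s2 eta phi) n =
  RI (fun w => gf s2 eta phi w * cos (INR n * w) * Mf phi w) / (2 * PI).
Proof.
intros HA. pose proof PI_RGT_0. assert (Cg := Cont_g s2 eta phi HA).
assert (R1 : RI (fun w => gf s2 eta phi w * cos (INR n * w) * Mf phi w) =
  lsumk phi (fun k => lsumk phi (fun l => PI * (Gm s2 eta phi (INR n + (INR k - INR l))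
   + Gm s2 eta phi (INR n - (INR k - INR l)))) 0) 0).
{ rewrite (RI_ext _ (fun w => lsum phi (fun k => lsum phi (fun l =>
     gf s2 eta phi w * (cos (INR n * w) * cos ((INR k - INR l) * w)))))).
  2: { intros w. rewrite Mf_eq. unfold lsum. rewrite <- lsumk_scal. apply lsumk_ext. intros k.
       rewrite <- !lsumk_scal. apply lsumk_ext. intros l. ring. }
  unfold lsum. rewrite (RI_lsumk phi (fun k w => lsumk phi (fun l =>
     gf s2 eta phi w * (cos (INR n * w) * cos ((INR k - INR l) * w))) 0) 0).
  2: { intros j. apply Cont_lsumk. intros l. apply Cont_mult; auto. apply Cont_mult; apply Cont_cos_lin. }
  apply lsumk_ext. intros k.
  rewrite (RI_lsumk phi (fun l w => gf s2 eta phi w * (cos (INR n * w) * cos ((INR k - INR l) * w))) 0).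
  apply lsumk_ext. intros l. apply RI_g_cos_cos; auto.
  intros l. apply Cont_mult; auto. apply Cont_mult; apply Cont_cos_lin. }
rewrite R1. rewrite lsumk_shift0. unfold nu, lsum.
set (F := fun k l => Gm s2 eta phi (INR n + (INR k - INR l))).
assert (E1 : lsumk phi (fun j => lsumk phi (fun l => Gm s2 eta phi (INR (n + j) - INR l)) 0) 0 =
             lsumk phi (fun k => lsumk phi (fun l => F k l) 0) 0).
{ apply lsumk_ext; intros k. apply lsumk_ext; intros l. unfold F. rewrite plus_INR. f_equal. ring. }
assert (E2 : lsumk phi (fun k => lsumk phi (fun l => Gm s2 eta phi (INR n - (INR k - INR l))) 0) 0 =
             lsumk phi (fun k => lsumk phi (fun l => F k l) 0) 0).
{ rewrite lsumk_swap. apply lsumk_ext; intros k. apply lsumk_ext; intros l. unfold F. f_equal. ring. }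
rewrite E1.
rewrite (lsumk_ext _ (fun k => lsumk phi (fun l => PI * (Gm s2 eta phi (INR n + (INR k - INR l))
   + Gm s2 eta phi (INR n - (INR k - INR l)))) 0) (fun k => PI * (lsumk phi (fun l => Gm s2 eta phi (INR n + (INR k - INR l))) 0
   + lsumk phi (fun l => Gm s2 eta phi (INR n - (INR k - INR l))) 0))).
2: { intros k. rewrite <- lsumk_plus, <- lsumk_scal. apply lsumk_ext; intros; ring. }
rewrite lsumk_scal, lsumk_plus, E2. unfold F. field. lra.
Qed.

Lemma RI_cos_cos_zero (n k l : nat) : (l < n + k)%nat -> (k < n + l)%nat ->
  RI (fun w => cos (INR n * w) * cos ((INR k - INR l) * w)) = 0.
Proof.
intros H1 H2.
rewrite (RI_ext _ (fun w => / 2 * (cos (INR (n + k - l) * w) + cos (INR (n + l - k) * w)))).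
2: { intros w. rewrite cos_prod. rewrite !minus_INR, !plus_INR by lia.
     replace (INR n * w + (INR k - INR l) * w) with ((INR n + INR k - INR l) * w) by ring.
     replace (INR n * w - (INR k - INR l) * w) with ((INR n + INR l - INR k) * w) by ring. field. }
rewrite RI_scal, RI_plus; try (apply Cont_plus); try apply Cont_cos_lin.
rewrite !RI_cos_nat by lia. ring.
Qed.

Lemma LR_nu_zero s2 eta phi n : invertible_ARMA eta phi -> (length eta <= n)%nat ->
  lsumk phi (nu s2 eta phi) n = 0.
Proof.
intros HA Hn. rewrite LR_nu_eq; auto. pose proof PI_RGT_0.
rewrite (RI_ext _ (fun w => s2 / (2 * PI) * lsum eta (fun k => lsum eta (fun l =>
   cos (INR n * w) * cos ((INR k - INR l) * w))))).
2: { intros w. replace (gf s2 eta phi w * cos (INR n * w) * Mf phi w) with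
       ((gf s2 eta phi w * Mf phi w) * cos (INR n * w)) by ring. rewrite g_Mphi; auto.
     rewrite Mf_eq. unfold lsum. rewrite Rmult_assoc. f_equal.
     rewrite lsumk_mult_r. apply lsumk_ext. intros k. rewrite Rmult_comm, <- lsumk_scal. reflexivity. }
rewrite RI_scal. unfold lsum. rewrite RI_lsumk.
rewrite (lsumk_ext_rng _ _ (fun _ => 0)). rewrite lsumk_zero. field. lra.
intros k Hk. rewrite RI_lsumk. rewrite (lsumk_ext_rng _ _ (fun _ => 0)). rewrite lsumk_zero. ring.
intros l Hl. apply RI_cos_cos_zero; lia.
intros l. apply Cont_mult; apply Cont_cos_lin.
intros k. apply Cont_lsumk. intros l. apply Cont_mult; apply Cont_cos_lin.
apply Cont_lsumk. intros k. apply Cont_lsumk. intros l. apply Cont_mult; apply Cont_cos_lin.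
Qed.

Lemma nu_bounded s2 eta phi : s2 > 0 -> invertible_ARMA eta phi ->
  exists B, forall n, Rabs (nu s2 eta phi n) <= B.
Proof.
intros Hs HA. exists (lsumk (map Rabs phi) (fun _ => Gm s2 eta phi 0) 0).
intros n. unfold nu, lsum. apply lsumk_bound. intros j. apply Gm_bound; auto.
Qed.

Lemma nu_zero s2 eta phi n : s2 > 0 -> invertible_ARMA eta phi -> (length eta <= n)%nat ->
  nu s2 eta phi n = 0.
Proof.
intros Hs HA Hn.
assert (H := rec_zero_R phi (fun k => nu s2 eta phi (k + length eta))).
replace n with ((n - length eta) + length eta)%nat by lia. apply H.
- destruct (nu_bounded s2 eta phi Hs HA) as [B HB]. exists B; auto.
- intros k. rewrite lsumk_shift0. rewrite (lsumk_ext _ _ (fun j => nu s2 eta phi ((k + length eta) + j))).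
  rewrite <- lsumk_shift0. apply LR_nu_zero; auto. lia. intros j. f_equal. lia.
- destruct HA as [_ [Hp _]]. auto.
- exists (RtoC 0). destruct HA as [_ [Hp _]]. intros E. apply Hp in E. rewrite Cmod_0 in E. lra.
Qed.

Definition Dx (x w : R) := 1 + 2 * x * cos w + x ^ 2.
Definition Px (x w : R) := (1 + x * cos w) / Dx x w.

Lemma Dx_lb x w : Rabs x < 1 -> (1 - Rabs x) ^ 2 <= Dx x w.
Proof.
intros Hx. unfold Dx. pose proof (COS_bound w).
assert (Rabs (x * cos w) <= Rabs x).
{ rewrite Rabs_mult. assert (Rabs (cos w) <= 1) by (apply Rabs_le; lra).
  pose proof (Rabs_pos x). nra. }
assert (- Rabs x <= x * cos w) by (apply Rabs_le_between in H0 ; lra || (pose proof (Rabs_le_between (x * cos w) (Rabs x)); tauto)).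
replace ((1 - Rabs x) ^ 2) with (1 - 2 * Rabs x + Rabs x ^ 2) by ring.
rewrite <- (pow2_abs x). nra.
Qed.

Lemma Dx_pos x w : Rabs x < 1 -> Dx x w > 0.
Proof.
intros Hx. eapply Rlt_le_trans; [|apply Dx_lb; auto].
apply pow_lt. lra.
Qed.

Lemma Cont_Dx x : Cont (Dx x).
Proof.
unfold Dx. apply Cont_plus. apply Cont_plus. apply Cont_const. apply Cont_mult. apply Cont_const. apply Cont_cos.
apply Cont_const.
Qed.
Lemma Cont_Px x : Rabs x < 1 -> Cont (Px x).
Proof.
intros Hx. unfold Px. apply Cont_div. apply Cont_plus. apply Cont_const. apply Cont_mult. apply Cont_const.
apply Cont_cos. apply Cont_Dx. intros w. apply Rgt_not_eq, Dx_pos; auto.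
Qed.

Definition ErrN (x : R) (N : nat) (w : R) :=
  (- x) ^ N * (cos (INR N * w) + x * cos ((INR N - 1) * w)) / Dx x w.

Lemma partial_cos x w N : Rabs x < 1 ->
  fsum (fun n => (- x) ^ n * cos (INR n * w)) N = Px x w - ErrN x N w.
Proof.
intros Hx. pose proof (Dx_pos x w Hx) as HD. unfold ErrN, Px.
induction N as [|N IH]; simpl fsum.
- simpl. rewrite Rmult_0_l, cos_0. replace ((0 - 1) * w) with (- w) by ring. rewrite cos_neg.
  field. lra.
- rewrite IH. rewrite S_INR.
  replace ((INR N + 1) * w) with (INR N * w + w) by ring.
  replace ((INR N + 1 - 1) * w) with (INR N * w) by ring.
  replace ((INR N - 1) * w) with (INR N * w - w) by ring.
  rewrite cos_plus, cos_minus. unfold Dx in *. simpl. field. lra.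
Qed.

Lemma Err_bound x N w : Rabs x < 1 -> Rabs (ErrN x N w) <= 2 / (1 - Rabs x) ^ 2 * Rabs x ^ N.
Proof.
intros Hx. unfold ErrN. pose proof (Dx_lb x w Hx). pose proof (Dx_pos x w Hx).
assert (Hp : 0 < (1 - Rabs x) ^ 2) by (apply pow_lt; lra).
unfold Rdiv. rewrite !Rabs_mult, Rabs_inv, <- RPow_abs, Rabs_Ropp, (Rabs_right (Dx x w)) by lra.
assert (Rabs (cos (INR N * w) + x * cos ((INR N - 1) * w)) <= 2).
{ eapply Rle_trans. apply Rabs_triang. rewrite Rabs_mult.
  pose proof (COS_bound (INR N * w)). pose proof (COS_bound ((INR N - 1) * w)).
  assert (Rabs (cos (INR N * w)) <= 1) by (apply Rabs_le; lra).
  assert (Rabs (cos ((INR N - 1) * w)) <= 1) by (apply Rabs_le; lra).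
  pose proof (Rabs_pos (cos ((INR N - 1) * w))). nra. }
assert (0 <= Rabs x ^ N) by (apply pow_le, Rabs_pos).
assert (/ Dx x w <= / (1 - Rabs x) ^ 2) by (apply Rinv_le_contravar; lra).
assert (0 <= / Dx x w) by (apply Rlt_le, Rinv_0_lt_compat; lra).
pose proof (Rabs_pos (cos (INR N * w) + x * cos ((INR N - 1) * w))).
replace (2 * / (1 - Rabs x) ^ 2 * Rabs x ^ N) with (Rabs x ^ N * (2 * / (1 - Rabs x) ^ 2)) by ring.
rewrite Rmult_assoc. apply Rmult_le_compat_l; auto.
apply Rmult_le_compat; auto.
Qed.

Lemma Cont_ErrN x N : Rabs x < 1 -> Cont (ErrN x N).
Proof.
intros Hx. unfold ErrN. apply Cont_div. apply Cont_mult. apply Cont_const.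
apply Cont_plus. apply Cont_cos_lin. apply Cont_mult. apply Cont_const. apply Cont_cos_lin.
apply Cont_Dx. intros w. apply Rgt_not_eq, Dx_pos; auto.
Qed.

Lemma lim_Cgeom C q : Rabs q < 1 -> is_lim_seq (fun N => C * q ^ N) 0.
Proof.
intros Hq. assert (H := is_lim_seq_mult' (fun _ => C) (fun N => q ^ N) C 0 (is_lim_seq_const C) (is_lim_seq_geom q Hq)).
rewrite Rmult_0_r in H. auto.
Qed.

Lemma series_lemma (h : R -> R) x : Cont h -> (forall w, 0 <= h w) -> Rabs x < 1 ->
  is_lim_seq (fun N => fsum (fun n => (- x) ^ n * RI (fun w => h w * cos (INR n * w))) N)
             (RI (fun w => h w * Px x w)).
Proof.
intros Hh Hpos Hx.
assert (E : forall N, fsum (fun n => (- x) ^ n * RI (fun w => h w * cos (INR n * w))) N =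
   RI (fun w => h w * Px x w) - RI (fun w => h w * ErrN x N w)).
{ intros N. rewrite <- RI_minus.
  rewrite (RI_ext _ (fun w => fsum (fun n => (- x) ^ n * (h w * cos (INR n * w))) N)).
  rewrite RI_fsum. induction N as [|N IH]; simpl; auto. rewrite IH. rewrite RI_scal. auto.
  apply Cont_mult; auto. apply Cont_cos_lin.
  intros n. apply Cont_mult. apply Cont_const. apply Cont_mult; auto. apply Cont_cos_lin.
  intros w. rewrite <- Rmult_minus_distr_l, <- partial_cos; auto.
  clear. induction N as [|N IH]; simpl. ring. rewrite <- IH. ring.
  apply Cont_mult; auto. apply Cont_Px; auto.
  apply Cont_mult; auto. apply Cont_ErrN; auto. }
apply is_lim_seq_ext with (fun N => RI (fun w => h w * Px x w) - RI (fun w => h w * ErrN x N w)).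
{ intros; rewrite E; auto. }
cut (is_lim_seq (fun N => RI (fun w => h w * Px x w) - RI (fun w => h w * ErrN x N w)) (RI (fun w => h w * Px x w) - 0)).
{ rewrite Rminus_0_r; auto. }
apply is_lim_seq_minus'. apply is_lim_seq_const.
set (C := 2 / (1 - Rabs x) ^ 2 * RI h).
assert (Hb : forall N, Rabs (RI (fun w => h w * ErrN x N w)) <= C * Rabs x ^ N).
{ intros N. eapply Rle_trans. apply RI_abs. apply Cont_mult; auto. apply Cont_ErrN; auto.
  replace (C * Rabs x ^ N) with (RI (fun w => (2 / (1 - Rabs x) ^ 2 * Rabs x ^ N) * h w)).
  apply RI_le. apply Cont_abs, Cont_mult; auto. apply Cont_ErrN; auto.
  apply Cont_mult; auto. apply Cont_const.
  intros w _. rewrite Rabs_mult, (Rabs_right (h w)) by (apply Rle_ge; auto).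
  rewrite Rmult_comm. apply Rmult_le_compat_r; auto. apply Err_bound; auto.
  rewrite RI_scal; auto. unfold C; ring. }
apply is_lim_seq_le_le with (u := fun N => - (C * Rabs x ^ N)) (w := fun N => C * Rabs x ^ N).
- intros N. apply Rabs_le_between. apply Hb.
- apply is_lim_seq_ext with (fun N => (- C) * Rabs x ^ N). intros; ring.
  apply lim_Cgeom. rewrite Rabs_Rabsolu; auto.
- apply lim_Cgeom. rewrite Rabs_Rabsolu; auto.
Qed.

Lemma lim_unique u (a b : R) : is_lim_seq u a -> is_lim_seq u b -> a = b.
Proof.
intros Ha Hb. apply is_lim_seq_unique in Ha. apply is_lim_seq_unique in Hb.
rewrite Ha in Hb. apply (f_equal real) in Hb. simpl in Hb. auto.
Qed.

Lemma fsum_ext_rng f g N : (forall i, (i < N)%nat -> f i = g i) -> fsum f N = fsum g N.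
Proof. induction N as [|N IH]; intros H; simpl; auto. rewrite IH, H; auto. Qed.
Lemma fsum_plus f g N : fsum (fun i => f i + g i) N = fsum f N + fsum g N.
Proof. induction N as [|N IH]; simpl; [ring|]. rewrite IH; ring. Qed.
Lemma fsum_scal c f N : fsum (fun i => c * f i) N = c * fsum f N.
Proof. induction N as [|N IH]; simpl; [ring|]. rewrite IH; ring. Qed.
Lemma fsum_front f n : fsum f (S n) = f 0%nat + fsum (fun i => f (S i)) n.
Proof. induction n as [|n IH]; simpl in *; [ring|]. rewrite IH. ring. Qed.
Lemma fsum_extend f M N : (forall i, (M <= i)%nat -> f i = 0) -> (M <= N)%nat -> fsum f N = fsum f M.
Proof.
intros H HMN. induction N as [|N IH]. replace M with 0%nat by lia; auto.
destruct (Nat.eq_dec M (S N)) as [E|E]. rewrite E; auto.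
simpl. rewrite IH by lia. rewrite H by lia. ring.
Qed.
Lemma lsumk_fsum p h k : lsumk p h k = fsum (fun i => nth i p 0 * h (k + i)%nat) (length p).
Proof.
revert k; induction p as [|a q IH]; intros k. simpl; auto.
change (lsumk (a::q) h k) with (a * h k + lsumk q h (S k)). change (length (a::q)) with (S (length q)).
rewrite fsum_front. rewrite IH. simpl nth. rewrite Nat.add_0_r. f_equal.
apply fsum_ext_rng. intros i _. f_equal. f_equal. lia.
Qed.
Lemma reval_fsum p x : reval p x = fsum (fun i => nth i p 0 * x ^ i) (length p).
Proof.
induction p as [|a q IH]. simpl; auto.
change (reval (a::q) x) with (a + x * reval q x). change (length (a::q)) with (S (length q)).
rewrite fsum_front. rewrite IH. rewrite <- fsum_scal. simpl nth. f_equal. ring.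
apply fsum_ext_rng. intros; simpl; ring.
Qed.
Fixpoint mklist (f : nat -> R) (k n : nat) : list R :=
  match n with O => nil | S n' => f k :: mklist f (S k) n' end.
Lemma reval_mklist f k n x : reval (mklist f k n) x = fsum (fun i => f (k + i)%nat * x ^ i) n.
Proof.
revert k; induction n as [|n IH]; intros k. simpl; auto.
change (reval (mklist f k (S n)) x) with (f k + x * reval (mklist f (S k) n) x).
rewrite fsum_front. rewrite IH. rewrite Nat.add_0_r. rewrite <- fsum_scal. f_equal. ring.
apply fsum_ext_rng. intros i _. replace (k + S i)%nat with (S k + i)%nat by lia. simpl; ring.
Qed.

Lemma cauchy (a b : nat -> R) K :
  fsum (fun N => fsum (fun i => a i * b (N - i)%nat) (S N)) K = fsum (fun i => a i * fsum b (K - i)) K.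
Proof.
induction K as [|K IH]. simpl; auto.
change (fsum (fun N => fsum (fun i => a i * b (N - i)%nat) (S N)) (S K)) with
  (fsum (fun N => fsum (fun i => a i * b (N - i)%nat) (S N)) K + fsum (fun i => a i * b (K - i)%nat) (S K)).
rewrite IH.
change (fsum (fun i => a i * fsum b (S K - i)) (S K)) with
  (fsum (fun i => a i * fsum b (S K - i)) K + a K * fsum b (S K - K)).
rewrite (fsum_ext_rng (fun i => a i * fsum b (S K - i)) (fun i => a i * fsum b (K - i) + a i * b (K - i)%nat)).
2: { intros i Hi. replace (S K - i)%nat with (S (K - i)) by lia. simpl. ring. }
rewrite fsum_plus. replace (S K - K)%nat with 1%nat by lia.
change (fsum (fun i => a i * b (K - i)%nat) (S K)) with (fsum (fun i => a i * b (K - i)%nat) K + a K * b (K - K)%nat).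
replace (K - K)%nat with 0%nat by lia. simpl. ring.
Qed.

Lemma lim_fsum (F : nat -> nat -> R) (l : nat -> R) L :
  (forall i, is_lim_seq (fun K => F i K) (l i)) -> is_lim_seq (fun K => fsum (fun i => F i K) L) (fsum l L).
Proof.
intros H. induction L as [|L IH]; simpl. apply is_lim_seq_const.
apply is_lim_seq_plus'; auto.
Qed.

Definition gam s2 eta phi (n : nat) := Gm s2 eta phi (INR n).
Definition Psi s2 eta phi x := RI (fun w => gf s2 eta phi w * Px x w) / (2 * PI).

Lemma Psi_series s2 eta phi x : s2 > 0 -> invertible_ARMA eta phi -> Rabs x < 1 ->
  is_lim_seq (fun N => fsum (fun n => (- x) ^ n * gam s2 eta phi n) N) (Psi s2 eta phi x).
Proof.
intros Hs HA Hx. pose proof PI_RGT_0.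
assert (H1 := series_lemma (gf s2 eta phi) x (Cont_g s2 eta phi HA) (fun w => Rlt_le _ _ (g_pos s2 eta phi w Hs HA)) Hx).
apply is_lim_seq_scal_l with (a := / (2 * PI)) in H1.
unfold Psi. simpl in H1. replace (RI (fun w => gf s2 eta phi w * Px x w) / (2 * PI)) with
  (/ (2 * PI) * RI (fun w => gf s2 eta phi w * Px x w)) by (unfold Rdiv; ring).
eapply is_lim_seq_ext; [|apply H1]. intros N. simpl. rewrite <- fsum_scal.
apply fsum_ext_rng. intros i _. unfold gam, Gm. unfold Rdiv. ring.
Qed.

Lemma Poisson x : Rabs x < 1 -> RI (Px x) = 2 * PI.
Proof.
intros Hx.
assert (H1 := series_lemma (fun _ => 1) x (Cont_const 1) (fun _ => Rle_0_1) Hx).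
assert (E : forall N, fsum (fun n => (- x) ^ n * RI (fun w => 1 * cos (INR n * w))) (S N) = 2 * PI).
{ induction N as [|N IH].
  - simpl. rewrite (RI_ext _ (fun _ => 1)). rewrite RI_const. ring. intros w. rewrite Rmult_0_l, cos_0. ring.
  - set (F := fun n => (- x) ^ n * RI (fun w => 1 * cos (INR n * w))) in *.
    change (fsum F (S (S N))) with (fsum F (S N) + F (S N)). rewrite IH. unfold F.
    rewrite (RI_ext _ (fun w => cos (INR (S N) * w))).
    rewrite RI_cos_nat by lia. ring. intros; ring. }
apply is_lim_seq_incr_n with (N := 1%nat) in H1.
eapply is_lim_seq_ext in H1. 2: { intros n. rewrite Nat.add_1_r. apply E. }
rewrite (RI_ext _ (fun w => 1 * Px x w)) by (intros; ring).
symmetry. eapply lim_unique. apply is_lim_seq_const. auto.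
Qed.

Definition cc s2 eta phi (N : nat) := fsum (fun i => nth i phi 0 * gam s2 eta phi (N - i)%nat) (S N).

Lemma cc_nu s2 eta phi N : (length phi <= S N)%nat -> cc s2 eta phi N = nu s2 eta phi N.
Proof.
intros HL. unfold cc, nu, lsum. rewrite lsumk_fsum. cbv beta.
rewrite (fsum_extend _ (length phi) (S N)); auto.
- apply fsum_ext_rng. intros i Hi. unfold gam. rewrite minus_INR by lia. auto.
- intros i Hi. rewrite nth_overflow by auto. ring.
Qed.

Lemma cc_zero s2 eta phi N : s2 > 0 -> invertible_ARMA eta phi ->
  (length phi <= N)%nat -> (length eta <= N)%nat -> cc s2 eta phi N = 0.
Proof. intros Hs HA H1 H2. rewrite cc_nu by lia. apply nu_zero; auto. Qed.

Definition M0 (eta phi : list R) := Nat.max (length phi) (length eta).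
Definition Ul s2 eta phi := mklist (cc s2 eta phi) 0 (M0 eta phi).

Lemma rational s2 eta phi x : s2 > 0 -> invertible_ARMA eta phi -> Rabs x < 1 ->
  reval phi (- x) * Psi s2 eta phi x = reval (Ul s2 eta phi) (- x).
Proof.
intros Hs HA Hx. set (t := - x). set (L := length phi).
set (a := fun i => nth i phi 0 * t ^ i). set (b := fun m => gam s2 eta phi m * t ^ m).
set (S := fun K => fsum (fun N => cc s2 eta phi N * t ^ N) K).
assert (HS : forall K, S K = fsum (fun i => a i * fsum b (K - i)) K).
{ intros K. unfold S. rewrite <- cauchy. apply fsum_ext_rng. intros N _. unfold cc.
  rewrite Rmult_comm, <- fsum_scal. apply fsum_ext_rng. intros i Hi. unfold a, b.
  replace (t ^ N) with (t ^ i * t ^ (N - i)) by (rewrite <- pow_add; f_equal; lia). ring. }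
assert (Hlim : is_lim_seq S (reval phi t * Psi s2 eta phi x)).
{ apply is_lim_seq_ext_loc with (fun K => fsum (fun i => a i * fsum b (K - i)) L).
  - exists L. intros K HK. rewrite HS. symmetry. apply fsum_extend; auto.
    intros i Hi. unfold a. rewrite nth_overflow by auto. ring.
  - rewrite reval_fsum. fold L. rewrite Rmult_comm, <- fsum_scal.
    apply lim_fsum. intros i. rewrite (Rmult_comm (Psi _ _ _ _)). fold (a i).
    apply is_lim_seq_mult'. apply is_lim_seq_const.
    apply (is_lim_seq_incr_n _ i). eapply is_lim_seq_ext; [|apply (Psi_series s2 eta phi x Hs HA Hx)].
    intros K. replace (K + i - i)%nat with K by lia. unfold b, t. apply fsum_ext_rng. intros; ring. }
assert (Hc : is_lim_seq S (reval (Ul s2 eta phi) t)).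
{ apply is_lim_seq_ext_loc with (fun _ => reval (Ul s2 eta phi) t). 2: apply is_lim_seq_const.
  exists (M0 eta phi). intros K HK. unfold S, Ul. rewrite reval_mklist. symmetry.
  rewrite (fsum_extend _ (M0 eta phi) K); auto.
  intros i Hi. unfold M0 in Hi. rewrite cc_zero; auto; try lia. ring. }
eapply lim_unique; eauto.
Qed.

Lemma g_min s2 eta phi : s2 > 0 -> invertible_ARMA eta phi ->
  exists m, m > 0 /\ forall w, -PI <= w <= PI -> m <= gf s2 eta phi w.
Proof.
intros Hs HA. pose proof PI_RGT_0.
destruct (continuity_ab_min (gf s2 eta phi) (-PI) PI) as [mx [H1 H2]].
lra. intros c _. apply Cont_g; auto.
exists (gf s2 eta phi mx). split. apply g_pos; auto. auto.
Qed.

Lemma twoP x w : Rabs x < 1 -> 2 * Px x w - 1 = (1 - x ^ 2) / Dx x w.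
Proof. intros Hx. unfold Px. pose proof (Dx_pos x w Hx). unfold Dx in *. field. lra. Qed.

Lemma Q_lb s2 eta phi m x : s2 > 0 -> invertible_ARMA eta phi -> Rabs x < 1 ->
  (forall w, -PI <= w <= PI -> m <= gf s2 eta phi w) ->
  m <= 2 * Psi s2 eta phi x - Gm s2 eta phi 0.
Proof.
intros Hs HA Hx Hm. pose proof PI_RGT_0. assert (Cg := Cont_g s2 eta phi HA).
assert (CP := Cont_Px x Hx).
assert (E : 2 * Psi s2 eta phi x - Gm s2 eta phi 0 = RI (fun w => gf s2 eta phi w * (2 * Px x w - 1)) / (2 * PI)).
{ unfold Psi, Gm. rewrite (RI_ext (fun w => gf s2 eta phi w * cos (0 * w)) (gf s2 eta phi)).
  2: { intros w. rewrite Rmult_0_l, cos_0. ring. }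
  rewrite (RI_ext (fun w => gf s2 eta phi w * (2 * Px x w - 1)) (fun w => 2 * (gf s2 eta phi w * Px x w) - gf s2 eta phi w)) by (intros; ring).
  rewrite RI_minus, RI_scal. field. lra. apply Cont_mult; auto.
  apply Cont_mult. apply Cont_const. apply Cont_mult; auto. auto. }
rewrite E.
assert (L : RI (fun w => m * (2 * Px x w - 1)) <= RI (fun w => gf s2 eta phi w * (2 * Px x w - 1))).
{ apply RI_le. cont. cont.
  intros w Hw. rewrite twoP by auto. apply Rmult_le_compat_r.
  apply Rlt_le, Rdiv_lt_0_compat. assert (x ^ 2 < 1). { rewrite <- (pow2_abs x). assert (0 <= Rabs x) by apply Rabs_pos. nra. } lra.
  apply Dx_pos; auto. apply Hm; lra. }
rewrite RI_scal, RI_minus, RI_scal, Poisson, RI_const in L; auto.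
apply (Rmult_le_reg_r (2 * PI)). lra. unfold Rdiv. rewrite Rmult_assoc, Rinv_l. lra. lra.
all: cont.
Qed.

Lemma cont_limit_ge (H : R -> R) : continuity_pt H 1 -> (forall x, 0 < x < 1 -> 0 <= H x) -> 0 <= H 1.
Proof.
intros Hc Hp. destruct (Rle_or_lt 0 (H 1)) as [h|h]; auto. exfalso.
unfold continuity_pt, continue_in, limit1_in, limit_in in Hc.
destruct (Hc (- H 1)) as [alp [Ha Hb]]. lra.
set (x := 1 - Rmin alp 1 / 2).
assert (Hm1 : Rmin alp 1 <= 1) by apply Rmin_r. assert (Hm2 : Rmin alp 1 <= alp) by apply Rmin_l.
assert (Hm3 : 0 < Rmin alp 1) by (apply Rmin_pos; lra).
assert (Hx : 0 < x < 1) by (unfold x; lra).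
specialize (Hb x). simpl in Hb. unfold R_dist in Hb.
assert (Rabs (H x - H 1) < - H 1).
{ apply Hb. split. split; [exact I|]. unfold x; apply Rgt_not_eq; lra. unfold x. rewrite Rabs_left; lra. }
apply Rabs_def2 in H0. specialize (Hp x Hx). lra.
Qed.

Lemma PF_cont f x : PolyFun f -> continuity_pt f x.
Proof.
intros [l Hl]. apply continuity_pt_ext with (reval l). intros; auto.
apply derivable_continuous_pt. exists (reval (pder l) x). apply is_derive_Reals. apply reval_pder.
Qed.

Definition Wf (phi : list R) x := reval phi (- x).
Definition Xf s2 eta phi x := reval (Ul s2 eta phi) (- x).

Lemma W_nz eta phi y : invertible_ARMA eta phi -> Rabs y <= 1 -> reval phi y <> 0.
Proof.
intros [_ [Hp _]] Hy E. assert (peval phi (RtoC y) = RtoC 0) by (rewrite reval_peval, E; auto).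
apply Hp in H. rewrite Cmod_R in H. lra.
Qed.

Lemma Psi_ratio s2 eta phi x : s2 > 0 -> invertible_ARMA eta phi -> Rabs x < 1 ->
  Psi s2 eta phi x = Xf s2 eta phi x / Wf phi x.
Proof.
intros Hs HA Hx. unfold Xf, Wf. rewrite <- rational; auto. field.
apply W_nz with eta; auto. rewrite Rabs_Ropp; lra.
Qed.

Lemma PF_W phi : PolyFun (Wf phi).
Proof. unfold Wf. apply PF_ext with (fun x => reval phi (-1 * x)). intros; f_equal; ring. apply PF_lin, PF_reval. Qed.
Lemma PF_X s2 eta phi : PolyFun (Xf s2 eta phi).
Proof. unfold Xf. apply PF_ext with (fun x => reval (Ul s2 eta phi) (-1 * x)). intros; f_equal; ring. apply PF_lin, PF_reval. Qed.

Lemma key_ineq s2 eta phi : s2 > 0 -> invertible_ARMA eta phi ->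
  2 * Xf s2 eta phi 1 - Gm s2 eta phi 0 * Wf phi 1 <> 0.
Proof.
intros Hs HA. destruct (g_min s2 eta phi Hs HA) as [m [Hm Hg]].
set (H := fun x => Rabs (2 * Xf s2 eta phi x - Gm s2 eta phi 0 * Wf phi x) - m * Rabs (Wf phi x)).
assert (HH : 0 <= H 1).
{ apply cont_limit_ge.
  - unfold H. apply continuity_pt_minus.
    + apply (continuity_pt_comp (fun x => 2 * Xf s2 eta phi x - Gm s2 eta phi 0 * Wf phi x) Rabs).
      apply PF_cont. apply PF_minus. apply PF_mult. apply PF_const. apply PF_X.
      apply PF_mult. apply PF_const. apply PF_W. apply Rcontinuity_abs.
    + apply continuity_pt_mult. apply continuity_pt_const; intros a b; auto.
      apply (continuity_pt_comp (Wf phi) Rabs). apply PF_cont, PF_W. apply Rcontinuity_abs.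
  - intros x Hx. unfold H. assert (Hx' : Rabs x < 1) by (rewrite Rabs_right; lra).
    assert (E : 2 * Xf s2 eta phi x - Gm s2 eta phi 0 * Wf phi x = Wf phi x * (2 * Psi s2 eta phi x - Gm s2 eta phi 0)).
    { rewrite Psi_ratio; auto. field. apply W_nz with eta; auto. rewrite Rabs_Ropp; lra. }
    rewrite E, Rabs_mult. pose proof (Q_lb s2 eta phi m x Hs HA Hx' Hg).
    rewrite (Rabs_right (2 * _ - _)) by lra. pose proof (Rabs_pos (Wf phi x)). nra. }
unfold H in HH. intros E. rewrite E, Rabs_R0 in HH.
assert (Rabs (Wf phi 1) > 0). { apply Rabs_pos_lt. apply W_nz with eta; auto. rewrite Rabs_Ropp, Rabs_R1; lra. }
nra.
Qed.

Lemma Cmod_lin_sq x w : Cmod (Cplus (RtoC 1) (Cmult (RtoC x) (eiw w))) ^ 2 = Dx x w.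
Proof.
rewrite Cmod_sq. unfold Dx, eiw, Cplus, Cmult, RtoC; simpl.
pose proof (sin2_cos2 w) as e. unfold Rsqr in e. nra.
Qed.

Lemma Cdiv_real z d : d <> 0 -> Cdiv z (RtoC d) = (fst z / d, snd z / d).
Proof. intros Hd. destruct z as [u v]. unfold Cdiv, Cinv, Cmult, RtoC; simpl. f_equal; field; auto. Qed.

Definition Fre s2 eta phi theta beta w :=
  gf s2 eta phi w * (cos w + beta * theta) / (Dx theta w * Dx (beta * theta) w).

Lemma F_re s2 eta phi theta beta : invertible_ARMA eta phi -> -1 < theta < 1 -> 0 <= beta <= 1 ->
  f_tb s2 eta phi theta beta = RtoC 0 -> RI (Fre s2 eta phi theta beta) = 0.
Proof.
intros HA Ht Hb Hf. pose proof PI_RGT_0.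
assert (Ht' : Rabs theta < 1) by (apply Rabs_def1; lra).
assert (Ha' : Rabs (beta * theta) < 1).
{ rewrite Rabs_mult, (Rabs_right beta) by lra. pose proof (Rabs_pos theta). nra. }
set (h := fun w : R =>
       Cmult
         (Cdiv (Cplus (eiw w) (RtoC (beta * theta)))
               (RtoC ((Cmod (Cmult (Cplus (RtoC 1) (Cmult (RtoC theta) (eiw w)))
                                   (Cplus (RtoC 1) (Cmult (RtoC (beta * theta)) (eiw w))))) ^ 2)))
         (RtoC (spec_dens s2 eta phi w))).
set (F2 := fun w => gf s2 eta phi w * sin w / (Dx theta w * Dx (beta * theta) w)).
assert (Hd : forall w, Dx theta w * Dx (beta * theta) w > 0).
{ intros w. apply Rmult_lt_0_compat; apply Dx_pos; auto. }
assert (Hh : forall w, h w = (Fre s2 eta phi theta beta w, F2 w)).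
{ intros w. unfold h. rewrite Cmod_mult, Rpow_mult_distr, !Cmod_lin_sq.
  rewrite Cdiv_real by (specialize (Hd w); lra).
  pose proof (Dx_pos theta w Ht'). pose proof (Dx_pos (beta * theta) w Ha').
  unfold Fre, F2, gf, eiw, Cmult, Cplus, RtoC; simpl. f_equal; field; repeat split; apply Rgt_not_eq; auto. }
assert (C1 : Cont (Fre s2 eta phi theta beta)).
{ unfold Fre. apply Cont_div. apply Cont_mult. apply Cont_g; auto. cont. apply Cont_mult; apply Cont_Dx.
  intros w; specialize (Hd w); lra. }
assert (C2 : Cont F2).
{ unfold F2. apply Cont_div. apply Cont_mult. apply Cont_g; auto. cont. apply Cont_mult; apply Cont_Dx.
  intros w; specialize (Hd w); lra. }
assert (HI : is_RInt h (-PI) PI (RI (Fre s2 eta phi theta beta), RI F2)).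
{ apply is_RInt_fct_extend_pair.
  - eapply is_RInt_ext. intros x _. rewrite Hh. reflexivity. unfold RI.
    apply (RInt_correct (V := R_CompleteNormedModule)). apply Cont_exRInt; auto.
  - eapply is_RInt_ext. intros x _. rewrite Hh. reflexivity. unfold RI.
    apply (RInt_correct (V := R_CompleteNormedModule)). apply Cont_exRInt; auto. }
unfold f_tb in Hf. fold h in Hf.
assert (HI' : @is_RInt (CompleteNormedModule.NormedModule R_AbsRing C_R_CompleteNormedModule) h (-PI) PI (RI (Fre s2 eta phi theta beta), RI F2)) by exact HI.
rewrite (is_RInt_unique _ _ _ _ HI') in Hf.
apply (f_equal fst) in Hf. simpl in Hf. lra.
Qed.

Lemma Wf_Psi s2 eta phi x : s2 > 0 -> invertible_ARMA eta phi -> Rabs x < 1 ->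
  Wf phi x * Psi s2 eta phi x = Xf s2 eta phi x.
Proof. intros. unfold Wf, Xf. apply rational; auto. Qed.

Ltac pf_step := match goal with
 | |- PolyFun (fun _ => ?c) => apply PF_const
 | |- PolyFun (fun x => x) => apply PF_id
 | |- PolyFun (fun x => @?f x + @?g x) => apply (PF_plus f g)
 | |- PolyFun (fun x => @?f x - @?g x) => apply (PF_minus f g)
 | |- PolyFun (fun x => @?f x * @?g x) => apply (PF_mult f g)
 | |- PolyFun (fun x => Wf ?phi x) => apply PF_W
 | |- PolyFun (fun x => Xf ?s ?e ?p x) => apply PF_X
 | |- PolyFun (fun x => Wf ?phi (?c * x)) => apply (PF_lin (Wf phi) c); apply PF_W
 | |- PolyFun (fun x => Xf ?s ?e ?p (?c * x)) => apply (PF_lin (Xf s e p) c); apply PF_X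
 end.

Definition Plt s2 eta phi beta theta :=
  let a := beta * theta in
  let W := Wf phi in let X := Xf s2 eta phi in let g0 := Gm s2 eta phi 0 in
  (1 - a * theta) * (X a * W theta - X theta * W a) +
  theta * (theta - a) * (g0 * W a * W theta - X a * W theta - X theta * W a).

Lemma PF_Plt s2 eta phi beta : PolyFun (Plt s2 eta phi beta).
Proof. unfold Plt. cbv zeta. repeat pf_step. Qed.

Lemma Plt_one s2 eta phi beta : s2 > 0 -> invertible_ARMA eta phi -> 0 <= beta < 1 ->
  Plt s2 eta phi beta 1 <> 0.
Proof.
intros Hs HA Hb. unfold Plt. rewrite !Rmult_1_r.
replace ((1 - beta) * (Xf s2 eta phi beta * Wf phi 1 - Xf s2 eta phi 1 * Wf phi beta) +
   1 * (1 - beta) * (Gm s2 eta phi 0 * Wf phi beta * Wf phi 1 - Xf s2 eta phi beta * Wf phi 1 -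
      Xf s2 eta phi 1 * Wf phi beta)) with
   (- ((1 - beta) * Wf phi beta * (2 * Xf s2 eta phi 1 - Gm s2 eta phi 0 * Wf phi 1))) by ring.
apply Ropp_neq_0_compat. repeat apply Rmult_integral_contrapositive_currified.
lra. unfold Wf. apply W_nz with eta; auto. rewrite Rabs_Ropp, Rabs_right; lra.
apply key_ineq; auto.
Qed.

Lemma pointwise_id c a t : t <> a -> 1 - a * t <> 0 -> 1 - t ^ 2 <> 0 ->
  1 + 2 * t * c + t ^ 2 <> 0 -> 1 + 2 * a * c + a ^ 2 <> 0 ->
  (c + a) / ((1 + 2 * t * c + t ^ 2) * (1 + 2 * a * c + a ^ 2)) =
  / (1 - t ^ 2) * (((1 + a * c) / (1 + 2 * a * c + a ^ 2) - (1 + t * c) / (1 + 2 * t * c + t ^ 2)) / (t - a)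
   + t * (1 - (1 + a * c) / (1 + 2 * a * c + a ^ 2) - (1 + t * c) / (1 + 2 * t * c + t ^ 2)) / (1 - a * t)).
Proof. intros. field. repeat split; auto. intros E; apply H; lra. Qed.

Lemma F_zero_lt s2 eta phi beta theta : s2 > 0 -> invertible_ARMA eta phi -> 0 <= beta < 1 ->
  -1 < theta < 1 -> theta <> 0 -> f_tb s2 eta phi theta beta = RtoC 0 -> Plt s2 eta phi beta theta = 0.
Proof.
intros Hs HA Hb Ht Ht0 Hf.
apply F_re in Hf; auto; [|lra].
pose proof PI_RGT_0.
set (a := beta * theta).
assert (Ht' : Rabs theta < 1) by (apply Rabs_def1; lra).
assert (Ha' : Rabs a < 1).
{ unfold a. rewrite Rabs_mult, (Rabs_right beta) by lra. pose proof (Rabs_pos theta). nra. }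
assert (Hta : theta - a <> 0). { unfold a. replace (theta - beta * theta) with ((1 - beta) * theta) by ring.
  apply Rmult_integral_contrapositive_currified; lra. }
assert (Hat : 1 - a * theta <> 0).
{ assert (Rabs (a * theta) < 1). { rewrite Rabs_mult. pose proof (Rabs_pos a). pose proof (Rabs_pos theta). nra. }
  apply Rabs_def2 in H0. lra. }
assert (Htt : 1 - theta ^ 2 <> 0). { assert (theta ^ 2 < 1) by nra. lra. }
set (k1 := / (1 - theta ^ 2) * (/ (theta - a) - theta / (1 - a * theta))).
set (k2 := / (1 - theta ^ 2) * (- / (theta - a) - theta / (1 - a * theta))).
set (k3 := / (1 - theta ^ 2) * (theta / (1 - a * theta))).
assert (Cg := Cont_g s2 eta phi HA).
assert (E : RI (Fre s2 eta phi theta beta) =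
   k1 * RI (fun w => gf s2 eta phi w * Px a w) + k2 * RI (fun w => gf s2 eta phi w * Px theta w)
   + k3 * RI (gf s2 eta phi)).
{ rewrite <- !RI_scal, <- !RI_plus.
  - apply RI_ext. intros w. unfold Fre. fold a.
    pose proof (Dx_pos theta w Ht'). pose proof (Dx_pos a w Ha').
    unfold Rdiv at 1. rewrite Rmult_assoc. rewrite <- (Rmult_1_l (cos w + a)) at 1.
    replace (gf s2 eta phi w * (1 * (cos w + a) * / (Dx theta w * Dx a w))) with
      (gf s2 eta phi w * ((cos w + a) / (Dx theta w * Dx a w))) by (unfold Rdiv; ring).
    unfold Dx, Px, Dx. rewrite pointwise_id; auto. unfold k1, k2, k3. field. repeat split; auto.
    all: try (unfold Dx in *; lra).
  - all: cont; try (apply Cont_Px; assumption). }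
assert (E2 : RI (gf s2 eta phi) = 2 * PI * Gm s2 eta phi 0).
{ unfold Gm. rewrite (RI_ext (fun w => gf s2 eta phi w * cos (0 * w)) (gf s2 eta phi)). field. lra.
  intros w. rewrite Rmult_0_l, cos_0; ring. }
assert (E3 : forall x, RI (fun w => gf s2 eta phi w * Px x w) = 2 * PI * Psi s2 eta phi x).
{ intros x. unfold Psi. field. lra. }
rewrite E, !E3, E2 in Hf.
rewrite !Psi_ratio in Hf; auto.
assert (HWa : Wf phi a <> 0). { unfold Wf. apply W_nz with eta; auto. rewrite Rabs_Ropp; lra. }
assert (HWt : Wf phi theta <> 0). { unfold Wf. apply W_nz with eta; auto. rewrite Rabs_Ropp; lra. }
unfold Plt. fold a.
replace ((1 - a * theta) * (Xf s2 eta phi a * Wf phi theta - Xf s2 eta phi theta * Wf phi a) +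
  theta * (theta - a) * (Gm s2 eta phi 0 * Wf phi a * Wf phi theta - Xf s2 eta phi a * Wf phi theta -
    Xf s2 eta phi theta * Wf phi a)) with
  ((1 - theta ^ 2) * (theta - a) * (1 - a * theta) * Wf phi a * Wf phi theta / (2 * PI) *
   (k1 * (2 * PI * (Xf s2 eta phi a / Wf phi a)) + k2 * (2 * PI * (Xf s2 eta phi theta / Wf phi theta)) +
    k3 * (2 * PI * Gm s2 eta phi 0))).
rewrite Hf. ring.
unfold k1, k2, k3. field. repeat split; auto; lra.
Qed.

Definition Tf s2 eta phi u := RI (fun t => gf s2 eta phi t / Dx u t).
Definition dTe s2 eta phi u t := - gf s2 eta phi t * (2 * cos t + 2 * u) * / (Dx u t * Dx u t).

Lemma is_derive_Tint s2 eta phi u t : Rabs u < 1 ->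
  is_derive (fun z => gf s2 eta phi t / Dx z t) u (dTe s2 eta phi u t).
Proof.
intros Hu. pose proof (Dx_pos u t Hu). unfold Dx in *. unfold dTe, Dx.
auto_derive. lra. field. lra.
Qed.

Lemma cont2d_Dx u t : continuity_2d_pt (fun u v => Dx u v) u t.
Proof.
apply continuity_2d_pt_ext with (fun u v => 1 + 2 * u * cos v + u * u).
intros; unfold Dx; ring.
apply continuity_2d_pt_plus. apply continuity_2d_pt_plus. apply continuity_2d_pt_const.
apply continuity_2d_pt_mult. apply continuity_2d_pt_mult. apply continuity_2d_pt_const. apply continuity_2d_pt_id1.
apply (continuity_1d_2d_pt_comp cos (fun u v => v)). apply continuity_cos. apply continuity_2d_pt_id2.
apply continuity_2d_pt_mult; apply continuity_2d_pt_id1.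
Qed.

Lemma cont2d_dTe s2 eta phi u t : invertible_ARMA eta phi -> Rabs u < 1 ->
  continuity_2d_pt (dTe s2 eta phi) u t.
Proof.
intros HA Hu. unfold dTe. pose proof (Dx_pos u t Hu).
apply continuity_2d_pt_mult. apply continuity_2d_pt_mult.
apply continuity_2d_pt_opp. apply (continuity_1d_2d_pt_comp (gf s2 eta phi) (fun u v => v)).
apply Cont_g; auto. apply continuity_2d_pt_id2.
apply continuity_2d_pt_plus. apply continuity_2d_pt_mult. apply continuity_2d_pt_const.
apply (continuity_1d_2d_pt_comp cos (fun u v => v)). apply continuity_cos. apply continuity_2d_pt_id2.
apply continuity_2d_pt_mult. apply continuity_2d_pt_const. apply continuity_2d_pt_id1.
apply continuity_2d_pt_inv. apply continuity_2d_pt_mult; apply cont2d_Dx.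
apply Rgt_not_eq. apply Rmult_lt_0_compat; lra.
Qed.

Lemma T_deriv s2 eta phi theta : invertible_ARMA eta phi -> Rabs theta < 1 ->
  is_derive (Tf s2 eta phi) theta (RI (dTe s2 eta phi theta)).
Proof.
intros HA Ht.
assert (Heps : 0 < (1 - Rabs theta) / 2) by lra.
set (eps := mkposreal _ Heps).
assert (Hball : forall y, Rabs (y - theta) < eps -> Rabs y < 1).
{ intros y Hy. simpl in Hy. pose proof (Rabs_triang_inv y theta). lra. }
assert (H := is_derive_RInt_param (fun u t => gf s2 eta phi t / Dx u t) (-PI) PI theta).
unfold Tf, RI.
replace (RInt (dTe s2 eta phi theta) (- PI) PI) with
  (RInt (fun t => Derive (fun u => gf s2 eta phi t / Dx u t) theta) (- PI) PI).
apply H.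
- exists eps. intros y Hy t _. change (Rabs (y - theta) < eps) in Hy.
  eexists. apply is_derive_Tint. auto.
- intros t _. apply continuity_2d_pt_ext_loc with (dTe s2 eta phi).
  + exists eps. intros u v Hu Hv. symmetry. apply is_derive_unique. apply is_derive_Tint. auto.
  + apply cont2d_dTe; auto.
- exists eps. intros y Hy. change (Rabs (y - theta) < eps) in Hy.
  apply (Cont_exRInt (fun t => gf s2 eta phi t / Dx y t)). apply Cont_div. apply Cont_g; auto.
  apply Cont_Dx. intros w. apply Rgt_not_eq, Dx_pos; auto.
- apply RInt_ext. intros x _. apply is_derive_unique. apply is_derive_Tint. auto.
Qed.

Definition Nf s2 eta phi u := 2 * Xf s2 eta phi u - Gm s2 eta phi 0 * Wf phi u.
Definition Mq phi u := (1 - u ^ 2) * Wf phi u.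

Lemma T_eq s2 eta phi u : s2 > 0 -> invertible_ARMA eta phi -> Rabs u < 1 ->
  Tf s2 eta phi u = 2 * PI * (Nf s2 eta phi u / Mq phi u).
Proof.
intros Hs HA Hu. pose proof PI_RGT_0. assert (Cg := Cont_g s2 eta phi HA).
assert (Huu : 1 - u ^ 2 <> 0). { assert (u ^ 2 < 1). rewrite <- (pow2_abs u). pose proof (Rabs_pos u). nra. lra. }
assert (HW : Wf phi u <> 0). { unfold Wf. apply W_nz with eta; auto. rewrite Rabs_Ropp; lra. }
unfold Tf. rewrite (RI_ext _ (fun t => / (1 - u ^ 2) * (2 * (gf s2 eta phi t * Px u t) - gf s2 eta phi t))).
2: { intros t. pose proof (Dx_pos u t Hu). unfold Px. unfold Dx in *. field. split; auto; lra. }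
rewrite RI_scal, RI_minus, RI_scal.
assert (E2 : RI (gf s2 eta phi) = 2 * PI * Gm s2 eta phi 0).
{ unfold Gm. rewrite (RI_ext (fun w => gf s2 eta phi w * cos (0 * w)) (gf s2 eta phi)). field. lra.
  intros w. rewrite Rmult_0_l, cos_0; ring. }
assert (E3 : RI (fun w => gf s2 eta phi w * Px u w) = 2 * PI * Psi s2 eta phi u).
{ unfold Psi. field. lra. }
rewrite E2, E3, Psi_ratio; auto. unfold Nf, Mq. field. auto.
all: cont; try (apply Cont_Px; auto).
Qed.

Lemma RI_dTe s2 eta phi theta : invertible_ARMA eta phi -> Rabs theta < 1 ->
  RI (dTe s2 eta phi theta) = -2 * RI (Fre s2 eta phi theta 1).
Proof.
intros HA Ht. rewrite <- RI_scal. apply RI_ext. intros t. unfold dTe, Fre. rewrite Rmult_1_l.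
pose proof (Dx_pos theta t Ht). field. lra.
unfold Fre. apply Cont_div. apply Cont_mult. apply Cont_g; auto. cont.
apply Cont_mult; apply Cont_Dx. intros w. pose proof (Dx_pos theta w Ht). rewrite Rmult_1_l.
apply Rgt_not_eq. apply Rmult_lt_0_compat; lra.
Qed.

Lemma PF_N s2 eta phi : PolyFun (Nf s2 eta phi).
Proof. unfold Nf. apply PF_ext with (fun x => 2 * Xf s2 eta phi x - Gm s2 eta phi 0 * Wf phi x). auto. repeat pf_step. Qed.
Lemma PF_M phi : PolyFun (Mq phi).
Proof. unfold Mq. apply PF_ext with (fun x => (1 - x * x) * Wf phi x). intros; ring. repeat pf_step. Qed.

Lemma beta_one_case s2 eta phi : s2 > 0 -> invertible_ARMA eta phi ->
  exists l, forall theta, -1 < theta < 1 -> f_tb s2 eta phi theta 1 = RtoC 0 -> In theta l.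
Proof.
intros Hs HA. pose proof PI_RGT_0.
destruct (PF_deriv _ (PF_N s2 eta phi)) as [N' [HN' dN]].
destruct (PF_deriv _ (PF_M phi)) as [M' [HM' dM]].
destruct (PF_deriv _ (PF_W phi)) as [W' [HW' dW]].
set (P := fun u => N' u * Mq phi u - Nf s2 eta phi u * M' u).
assert (HW1 : Wf phi 1 <> 0). { unfold Wf. apply W_nz with eta; auto. rewrite Rabs_Ropp, Rabs_R1; lra. }
assert (P1 : P 1 <> 0).
{ assert (EM : M' 1 = -2 * Wf phi 1).
  { assert (D1 : is_derive (Mq phi) 1 (-2 * Wf phi 1 + (1 - 1 ^ 2) * W' 1)).
    { apply is_derive_Reals. unfold Mq.
      apply (derivable_pt_lim_mult (fun u => 1 - u ^ 2) (Wf phi) 1 (-2)).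
      apply is_derive_Reals. auto_derive. auto. ring.
      apply is_derive_Reals. apply dW. }
    apply is_derive_unique in D1. rewrite (is_derive_unique _ _ _ (dM 1)) in D1. rewrite D1. ring. }
  unfold P. rewrite EM. unfold Mq. replace (1 - 1 ^ 2) with 0 by ring.
  replace (N' 1 * (0 * Wf phi 1) - Nf s2 eta phi 1 * (-2 * Wf phi 1)) with (2 * Nf s2 eta phi 1 * Wf phi 1) by ring.
  apply Rmult_integral_contrapositive_currified; auto. apply Rmult_integral_contrapositive_currified. lra.
  unfold Nf. apply key_ineq; auto. }
assert (PP : PolyFun P).
{ unfold P. apply PF_minus; apply PF_mult; auto. apply PF_M. apply PF_N. }
destruct (roots_finite P 1 PP P1) as [l Hl]. exists l. intros theta Ht Hf. apply Hl.
assert (Ht' : Rabs theta < 1) by (apply Rabs_def1; lra).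
apply F_re in Hf; auto; [|lra].
assert (D0 := T_deriv s2 eta phi theta HA Ht'). rewrite RI_dTe, Hf, Rmult_0_r in D0; auto.
assert (HM : Mq phi theta <> 0).
{ unfold Mq. apply Rmult_integral_contrapositive_currified. assert (theta ^ 2 < 1) by nra. lra.
  unfold Wf. apply W_nz with eta; auto. rewrite Rabs_Ropp; lra. }
assert (D2 : is_derive (fun u => 2 * PI * (Nf s2 eta phi u / Mq phi u)) theta
   (2 * PI * ((N' theta * Mq phi theta - Nf s2 eta phi theta * M' theta) / Mq phi theta ^ 2))).
{ apply is_derive_scal. apply is_derive_div; auto. }
assert (D3 : is_derive (Tf s2 eta phi) theta
   (2 * PI * ((N' theta * Mq phi theta - Nf s2 eta phi theta * M' theta) / Mq phi theta ^ 2))).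
{ apply is_derive_ext_loc with (fun u => 2 * PI * (Nf s2 eta phi u / Mq phi u)); auto.
  assert (Heps : 0 < 1 - Rabs theta) by lra.
  exists (mkposreal _ Heps). intros y Hy. change (Rabs (y - theta) < 1 - Rabs theta) in Hy.
  symmetry. apply T_eq; auto. pose proof (Rabs_triang_inv y theta). lra. }
apply is_derive_unique in D0. apply is_derive_unique in D3. rewrite D0 in D3.
assert (E : (N' theta * Mq phi theta - Nf s2 eta phi theta * M' theta) / Mq phi theta ^ 2 = 0).
{ apply (Rmult_eq_reg_l (2 * PI)). rewrite <- D3. ring. lra. }
unfold P. unfold Rdiv in E. apply Rmult_integral in E. destruct E as [E|E]; auto.
exfalso. apply Rinv_neq_0_compat in E; auto. apply pow_nonzero; auto.
Qed.

Theorem proposition4p5 (sigma2 : R) (eta phi : list R) :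
  sigma2 > 0 -> invertible_ARMA eta phi ->
  forall beta : R, 0 <= beta <= 1 ->
    exists l : list R, forall theta : R,
      -1 < theta < 1 -> f_tb sigma2 eta phi theta beta = RtoC 0 -> In theta l.
Proof.
intros Hs HA beta Hb.
destruct (Req_dec beta 1) as [E|E].
- subst. apply beta_one_case; auto.
- assert (Hb' : 0 <= beta < 1) by lra.
  destruct (roots_finite (Plt sigma2 eta phi beta) 1 (PF_Plt sigma2 eta phi beta) (Plt_one sigma2 eta phi beta Hs HA Hb')) as [l Hl].
  exists (0 :: l). intros theta Ht Hf. destruct (Req_dec theta 0) as [E0|E0].
  + left; auto.
  + right. apply Hl. apply F_zero_lt; auto.
Qed.
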